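(* Let $V$ be a real sequence and suppose that for some $a>0$ the equation $(-\Delta+V)\psi=0$ has a solution $\psi^-$ with $n^a\psi^-_n\to1$ as $n\to\infty$. Then for any solution $\psi$ that is linearly independent of $\psi^-$, $|\psi^-_n\psi_n|\sim Cn$ for some constant $C>0$.
   Context: $(\Delta f)_n=f_{n+1}+f_{n-1}-2f_n$; $(-\Delta+V)\psi=0$ means $-\psi_{n+1}-\psi_{n-1}+(2+V_n)\psi_n=0$ for $n\ge1$. *)

(* Defs.v *)
From Stdlib Require Import Reals.
From Coquelicot Require Import Coquelicot.
Open Scope R_scope.

Definition dlap (f : nat -> R) (n : nat) : R :=
  f (S n) + f (Nat.pred n) - 2 * f n.

Definition is_solution (V psi : nat -> R) : Prop :=
  forall n : nat, (1 <= n)%nat -> - dlap psi n + V n * psi n = 0.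

Definition lin_indep (f g : nat -> R) : Prop :=
  forall a b : R, (forall n, a * f n + b * g n = 0) -> a = 0 /\ b = 0.

(* Main.v *)
Require Import Defs.
From Stdlib Require Import Reals Lra Lia.
From Coquelicot Require Import Coquelicot.
Open Scope R_scope.

Lemma rec_step V f n : is_solution V f ->
  f (S (S n)) = (2 + V (S n)) * f (S n) - f n.
Proof. intros H. specialize (H (S n) ltac:(lia)). unfold dlap in H. simpl in H. lra. Qed.

Lemma sol_zero V f : is_solution V f -> f 0%nat = 0 -> f 1%nat = 0 -> forall n, f n = 0.
Proof.
  intros Hs H0 H1.
  assert (forall n, f n = 0 /\ f (S n) = 0).
  { induction n as [|n [IH1 IH2]]; [auto|]. split; auto.
    rewrite (rec_step V f n Hs), IH1, IH2. ring. }
  intros n; apply H.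
Qed.

Lemma lin_sol V f g al be : is_solution V f -> is_solution V g ->
  is_solution V (fun n => al * f n + be * g n).
Proof.
  intros Hf Hg n Hn. specialize (Hf n Hn). specialize (Hg n Hn).
  unfold dlap in *. nra.
Qed.

Lemma wronsk V f g : is_solution V f -> is_solution V g ->
  forall n, f (S n) * g n - f n * g (S n) = f 1%nat * g 0%nat - f 0%nat * g 1%nat.
Proof.
  intros Hf Hg. induction n; [reflexivity|].
  rewrite (rec_step V f n Hf), (rec_step V g n Hg). rewrite <- IHn. ring.
Qed.

Lemma wronsk_nz V f g : is_solution V f -> is_solution V g -> lin_indep f g ->
  f 1%nat * g 0%nat - f 0%nat * g 1%nat <> 0.
Proof.
  intros Hf Hg Hli HW.
  destruct (Req_dec (f 1%nat) 0) as [E1|E1]; [destruct (Req_dec (g 1%nat) 0) as [E2|E2]|].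
  - destruct (Hli (g 0%nat) (- f 0%nat)) as [Ha Hb].
    { apply (sol_zero V (fun n => g 0%nat * f n + - f 0%nat * g n)).
      apply lin_sol; auto. simpl; ring. rewrite E1, E2; ring. }
    assert (forall n, f n = 0).
    { apply (sol_zero V f Hf). lra. auto. }
    destruct (Hli 1 0) as [H1 _]. intros n. rewrite H. ring. lra.
  - destruct (Hli (g 1%nat) (- f 1%nat)) as [Ha Hb].
    { apply (sol_zero V (fun n => g 1%nat * f n + - f 1%nat * g n)).
      apply lin_sol; auto. simpl; lra. simpl; ring. }
    lra.
  - destruct (Hli (g 1%nat) (- f 1%nat)) as [Ha Hb].
    { apply (sol_zero V (fun n => g 1%nat * f n + - f 1%nat * g n)).
      apply lin_sol; auto. simpl; lra. simpl; ring. }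
    lra.
Qed.
Lemma stolz (A B : nat -> R) (L : R) (N : nat) :
  (forall n, (N <= n)%nat -> B n < B (S n)) ->
  is_lim_seq B p_infty ->
  is_lim_seq (fun n => (A (S n) - A n) / (B (S n) - B n)) L ->
  is_lim_seq (fun n => A n / B n) L.
Proof.
  intros Hinc HB HL.
  apply is_lim_seq_spec in HB. apply is_lim_seq_spec in HL.
  apply is_lim_seq_spec. intros eps.
  assert (He2 : 0 < eps / 2) by (destruct eps; simpl; lra).
  destruct (HL (mkposreal _ He2)) as [N1 HN1]. simpl in HN1.
  set (M := Nat.max N N1).
  assert (Hstep : forall n, (M <= n)%nat ->
     Rabs ((A (S n) - A n) - L * (B (S n) - B n)) <= eps/2 * (B (S n) - B n)).
  { intros n Hn.
    assert (Hd : 0 < B (S n) - B n) by (specialize (Hinc n ltac:(lia)); lra).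
    specialize (HN1 n ltac:(lia)).
    replace ((A (S n) - A n) - L * (B (S n) - B n)) with
      (((A (S n) - A n) / (B (S n) - B n) - L) * (B (S n) - B n)) by (field; lra).
    rewrite Rabs_mult, (Rabs_right (B (S n) - B n)) by lra.
    apply Rmult_le_compat_r; lra. }
  assert (Hsum : forall k, Rabs ((A (k+M)%nat - A M) - L * (B (k+M)%nat - B M))
                       <= eps/2 * (B (k+M)%nat - B M)).
  { induction k.
    - simpl. replace (A M - A M - L * (B M - B M)) with 0 by ring.
      rewrite Rabs_R0. lra.
    - replace (S k + M)%nat with (S (k + M)) by lia.
      specialize (Hstep (k+M)%nat ltac:(lia)).
      replace (A (S (k + M)) - A M - L * (B (S (k + M)) - B M)) with
        ((A (S (k+M)) - A (k+M)%nat - L * (B (S (k+M)) - B (k+M)%nat)) +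
         (A (k+M)%nat - A M - L * (B (k+M)%nat - B M))) by ring.
      eapply Rle_trans. apply Rabs_triang. lra. }
  set (K := Rabs (A M - L * B M) + eps/2 * Rabs (B M)).
  destruct (HB (2 * K / eps + 1)) as [N2 HN2].
  exists (Nat.max M N2). intros n Hn.
  specialize (HN2 n ltac:(lia)).
  assert (HK : 0 <= K) by (unfold K; pose proof (Rabs_pos (A M - L * B M));
     pose proof (Rabs_pos (B M)); nra).
  assert (Hepspos : 0 < eps) by (destruct eps; simpl; lra).
  assert (Hbig : 2 * K / eps + 1 <= B n) by lra.
  assert (HKd : 0 <= 2 * K / eps) by (apply Rmult_le_pos; [lra| left; apply Rinv_0_lt_compat; lra]).
  assert (HBn : 0 < B n) by lra.
  assert (HKB : K < eps/2 * B n).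
  { assert (2 * K / eps < B n) by lra.
    apply (Rmult_lt_compat_l (eps/2)) in H; [|lra].
    replace (eps/2 * (2*K/eps)) with K in H by (field; lra). exact H. }
  pose proof (Hsum (n - M)%nat) as Hs. replace (n - M + M)%nat with n in Hs by lia.
  assert (Hmain : Rabs (A n - L * B n) < eps * B n).
  { replace (A n - L * B n) with ((A n - A M - L * (B n - B M)) + (A M - L * B M)) by ring.
    eapply Rle_lt_trans. apply Rabs_triang.
    assert (eps/2 * (B n - B M) <= eps/2 * (B n + Rabs (B M))).
    { apply Rmult_le_compat_l. lra. pose proof (Rle_abs (- B M)). rewrite Rabs_Ropp in H. lra. }
    unfold K in HKB. lra. }
  replace (A n / B n - L) with ((A n - L * B n) / B n) by (field; lra).
  unfold Rdiv. rewrite Rabs_mult, Rabs_inv, (Rabs_right (B n)) by lra.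
  apply (Rmult_lt_reg_r (B n)); [lra|].
  rewrite Rmult_assoc, Rinv_l by lra. lra.
Qed.
Lemma inv_n : is_lim_seq (fun n => / INR n) 0.
Proof. apply (is_lim_seq_inv INR p_infty). apply is_lim_seq_INR. easy. Qed.

Lemma Rpower_1_base c : Rpower 1 c = 1.
Proof. unfold Rpower. rewrite ln_1, Rmult_0_r. apply exp_0. Qed.

Lemma deriv_lim (c : R) :
  is_lim_seq (fun n => INR n * (Rpower (1 + / INR n) c - 1)) c.
Proof.
  pose proof (derivable_pt_lim_power 1 c Rlt_0_1) as Hd.
  rewrite Rpower_1_base, Rmult_1_r in Hd.
  pose proof inv_n as Hi. apply is_lim_seq_spec in Hi.
  apply is_lim_seq_spec. intros eps.
  destruct (Hd eps (cond_pos eps)) as [delta Hdel].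
  destruct (Hi delta) as [N HN].
  exists (Nat.max N 1). intros n Hn.
  specialize (HN n ltac:(lia)).
  assert (Hpos : 0 < INR n) by (apply lt_0_INR; lia).
  rewrite Rminus_0_r in HN.
  assert (Hh : / INR n <> 0) by (apply Rinv_neq_0_compat; lra).
  specialize (Hdel (/ INR n) Hh HN).
  rewrite Rpower_1_base in Hdel.
  replace (INR n * (Rpower (1 + / INR n) c - 1)) with
    ((Rpower (1 + / INR n) c - 1) / / INR n) by (field; lra).
  exact Hdel.
Qed.

Lemma pow_lim1 (c : R) :
  is_lim_seq (fun n => Rpower (1 + / INR n) c) 1.
Proof.
  assert (H := is_lim_seq_mult' _ _ _ _ (deriv_lim c) inv_n).
  assert (H2 := is_lim_seq_plus' _ _ _ _ H (is_lim_seq_const 1)).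
  replace (Finite 1) with (Finite (c * 0 + 1)) by (f_equal; ring).
  apply (is_lim_seq_ext_loc _ _ _ ) with (2 := H2).
  exists 1%nat. intros n Hn. assert (0 < INR n) by (apply lt_0_INR; lia).
  field. lra.
Qed.

Lemma PS n c : (1 <= n)%nat ->
  Rpower (INR (S n)) c = Rpower (INR n) c * Rpower (1 + / INR n) c.
Proof.
  intros Hn. assert (0 < INR n) by (apply lt_0_INR; lia).
  assert (0 < 1 + / INR n) by (pose proof (Rinv_0_lt_compat _ H); lra).
  rewrite Rpower_mult_distr by lra. f_equal. rewrite S_INR. field. lra.
Qed.

Lemma BP n a : (1 <= n)%nat ->
  Rpower (INR n) (2 * a + 1) = Rpower (INR n) a * Rpower (INR n) a * INR n.
Proof.
  intros Hn. assert (0 < INR n) by (apply lt_0_INR; lia).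
  replace (2 * a + 1) with (a + a + 1) by ring.
  rewrite !Rpower_plus, Rpower_1 by lra. ring.
Qed.

Lemma Rpower_pos x y : 0 < Rpower x y.
Proof. unfold Rpower. apply exp_pos. Qed.

Theorem corollary4 (V : nat -> R) (a : R) (psim : nat -> R) :
  0 < a ->
  is_solution V psim ->
  is_lim_seq (fun n => Rpower (INR n) a * psim n) 1 ->
  forall psi : nat -> R,
    is_solution V psi ->
    lin_indep psim psi ->
    exists C : R, 0 < C /\
      is_lim_seq (fun n => Rabs (psim n * psi n) / (C * INR n)) 1.
Proof.
  intros Ha Hm HL psi Hp Hli.
  set (W := psim 1%nat * psi 0%nat - psim 0%nat * psi 1%nat).
  assert (HW : W <> 0) by (apply (wronsk_nz V); auto).
  assert (HWn : forall n, psim (S n) * psi n - psim n * psi (S n) = W)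
    by (apply (wronsk V); auto).
  set (b := 2 * a + 1).
  assert (Hb : 0 < b) by (unfold b; lra).
  set (X := fun n => Rpower (INR n) a * psim n).
  assert (HN0 : exists N0, (1 <= N0)%nat /\ forall n, (N0 <= n)%nat -> 0 < psim n).
  { pose proof HL as HL'. apply is_lim_seq_spec in HL'.
    assert (Hh : 0 < /2) by lra.
    destruct (HL' (mkposreal _ Hh)) as [N HN]. simpl in HN.
    exists (Nat.max N 1). split; [lia|]. intros n Hn. specialize (HN n ltac:(lia)).
    apply Rabs_def2 in HN. pose proof (Rpower_pos (INR n) a).
    destruct (Rlt_or_le 0 (psim n)); auto. nra. }
  destruct HN0 as [N0 [HN01 HN0]].
  set (A := fun n => psi n / psim n).
  set (B := fun n => Rpower (INR n) b).
  set (E := fun n => Rpower (1 + / INR n) a).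
  set (D := fun n => INR n * (Rpower (1 + / INR n) b - 1)).
  assert (Hratio : is_lim_seq (fun n => (A (S n) - A n) / (B (S n) - B n)) (- W / b)).
  { assert (HX1 : is_lim_seq (fun n => X (S n)) 1) by (apply (is_lim_seq_incr_1 X); exact HL).
    assert (Hden : is_lim_seq (fun n => X n * X (S n) / E n * D n) (1 * 1 / 1 * b)).
    { apply is_lim_seq_mult'. apply is_lim_seq_div'. apply is_lim_seq_mult'; auto.
      apply pow_lim1. lra. apply deriv_lim. }
    replace (1 * 1 / 1 * b) with b in Hden by field.
    assert (Hq := is_lim_seq_div' _ _ _ _ (is_lim_seq_const (- W)) Hden ltac:(lra)).
    apply (is_lim_seq_ext_loc _ _ _) with (2 := Hq).
    exists N0. intros n Hn.
    assert (Hn1 : (1 <= n)%nat) by lia.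
    assert (Hpn : 0 < INR n) by (apply lt_0_INR; lia).
    assert (Hh : 0 < / INR n) by (apply Rinv_0_lt_compat; lra).
    assert (Hm1 : 0 < psim n) by auto. assert (Hm2 : 0 < psim (S n)) by auto.
    assert (HD : Rpower (1 + / INR n) 0 < Rpower (1 + / INR n) b) by (apply Rpower_lt; lra).
    rewrite Rpower_O in HD by lra.
    unfold A, B, X, E, D. rewrite (PS n a Hn1), (PS n b Hn1).
    replace (Rpower (INR n) b) with (Rpower (INR n) a * Rpower (INR n) a * INR n) by (unfold b; symmetry; apply BP; auto).
    rewrite <- (HWn n).
    pose proof (Rpower_pos (INR n) a). pose proof (Rpower_pos (1 + / INR n) a).
    assert (0 < Rpower (INR n) a * Rpower (INR n) a * INR n * (Rpower (1 + / INR n) b - 1))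
      by (repeat apply Rmult_lt_0_compat; lra).
    field. repeat split; try lra; nra. }
  assert (HAB : is_lim_seq (fun n => A n / B n) (- W / b)).
  { apply (stolz A B _ N0); auto.
    - intros n Hn. unfold B. apply Rlt_Rpower_l. lra. split.
      apply lt_0_INR; lia. rewrite S_INR; lra.
    - apply is_lim_seq_le_p_loc with (u := INR); [|apply is_lim_seq_INR].
      exists 1%nat. intros n Hn. unfold B, b. rewrite (BP n a Hn).
      assert (Hpn : 1 <= INR n) by (apply (le_INR 1); lia).
      assert (H1 : Rpower (INR n) 0 <= Rpower (INR n) a) by (apply Rle_Rpower; lra).
      rewrite Rpower_O in H1 by lra.
      assert (H2 : 1 <= Rpower (INR n) a * Rpower (INR n) a) by nra.
      assert (0 <= (Rpower (INR n) a * Rpower (INR n) a - 1) * INR n) by (apply Rmult_le_pos; lra).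
      lra. }
  set (C := Rabs W / b).
  assert (HC : 0 < C) by (unfold C; apply Rdiv_lt_0_compat; [apply Rabs_pos_lt|]; auto).
  exists C. split; auto.
  assert (Hf := is_lim_seq_mult' _ _ _ _ (is_lim_seq_mult' _ _ _ _ HL HL) HAB).
  apply is_lim_seq_abs in Hf. simpl in Hf.
  assert (Hg := is_lim_seq_div' _ _ _ _ Hf (is_lim_seq_const C) ltac:(lra)).
  replace (Rabs (1 * 1 * (- W / b)) / C) with 1 in Hg.
  2:{ unfold C. replace (1 * 1 * (- W / b)) with (- W / b) by ring. rewrite Rabs_div, Rabs_Ropp, (Rabs_right b) by lra.
      field. split. lra. apply Rabs_no_R0; auto. }
  apply (is_lim_seq_ext_loc _ _ _) with (2 := Hg).
  exists N0. intros n Hn.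
  assert (Hpn : 0 < INR n) by (apply lt_0_INR; lia).
  assert (Hm1 : 0 < psim n) by auto.
  unfold A, B, b. rewrite (BP n a ltac:(lia)).
  pose proof (Rpower_pos (INR n) a).
  replace (Rpower (INR n) a * psim n * (Rpower (INR n) a * psim n) *
     (psi n / psim n / (Rpower (INR n) a * Rpower (INR n) a * INR n)))
    with ((psim n * psi n) / INR n) by (field; lra).
  rewrite Rabs_div, (Rabs_right (INR n)) by lra. field. lra.
Qed.
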